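(* Let $\mathbb K$ be an infinite field, $\mathcal N$ a vector space over $\mathbb K$, and $f:(\mathbb K^d)_{\mathrm{nc}}\to\mathcal N_{\mathrm{nc}}$ a nc function. Assume that for each $n$, $f(X_1,\dots,X_d)$ is a polynomial function of the $dn^2$ commuting variables $(X_i)_{jk}$ ($i=1,\dots,d$; $j,k=1,\dots,n$) with values in $\mathcal N^{n\times n}$, and that the degrees of these polynomial functions are bounded uniformly in $n$. Then $f$ is a nc polynomial with coefficients in $\mathcal N$: there exist $L\in\mathbb N$ and $p_w\in\mathcal N$ ($w\in\mathcal G_d$, $|w|\le L$) such that $f(X)=\sum_{|w|\le L}X^wp_w$ for all $n$ and all $X\in(\mathbb K^{n\times n})^d$.
   Context: $n\times n$ matrices over $\mathbb K^d$ are identified with $d$-tuples $X=(X_1,\dots,X_d)$ of $n\times n$ matrices over $\mathbb K$; $(\mathbb K^d)_{\mathrm{nc}}=\coprod_n(\mathbb K^{n\times n})^d$, $\mathcal N_{\mathrm{nc}}=\coprod_n\mathcal N^{n\times n}$. A nc function $f$ satisfies $f((\mathbb K^{n\times n})^d)\subseteq\mathcal N^{n\times n}$, $f(X\oplus Y)=f(X)\oplus f(Y)$ (direct sums taken componentwise, $X\oplus Y=\begin{bmatrix}X&0\\0&Y\end{bmatrix}$), and $f(SXS^{-1})=Sf(X)S^{-1}$ for invertible $S\in\mathbb K^{n\times n}$ (acting componentwise). $\mathcal G_d$ is the free monoid on letters $g_1,\dots,g_d$; for $w=g_{i_1}\cdots g_{i_\ell}$, $|w|=\ell$ and $X^w=X_{i_1}\cdots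 X_{i_\ell}$ ($X^\emptyset=I_n$); $X^wp_w\in\mathcal N^{n\times n}$ is the matrix with entries $(X^w)_{jk}p_w$. *)

(* Defs.v *)
From HB Require Import structures.
From mathcomp Require Import all_boot all_order all_algebra.
Set Implicit Arguments. Unset Strict Implicit. Unset Printing Implicit Defensive.
Import Order.TTheory GRing.Theory Num.Theory.
Local Open Scope ring_scope.

Section NC.
Variables (K : fieldType) (N : lmodType K) (d : nat).

Definition tup (n : nat) := 'I_d -> 'M[K]_n.

Definition lact m n p (A : 'M[K]_(m, n)) (M : 'M[N]_(n, p)) : 'M[N]_(m, p) :=
  \matrix_(i, j) \sum_(k < n) A i k *: M k j.
Definition ract m n p (M : 'M[N]_(m, n)) (A : 'M[K]_(n, p)) : 'M[N]_(m, p) :=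
  \matrix_(i, j) \sum_(k < n) A k j *: M i k.

Definition sc m n (a : K) (M : 'M[N]_(m, n)) : 'M[N]_(m, n) := map_mx (fun v => a *: v) M.

Definition nc_function (f : forall n, tup n -> 'M[N]_n) : Prop :=
  (forall m n (X : tup m) (Y : tup n),
      f (m + n)%N (fun i => block_mx (X i) 0 0 (Y i)) = block_mx (f m X) 0 0 (f n Y))
  /\ (forall n (X : tup n) (S : 'M[K]_n), S \in unitmx ->
      f n (fun i => S *m X i *m invmx S) = ract (lact S (f n X)) (invmx S)).

(* variables of the n-th level: (i, j, k) <-> (X_i)_{jk} *)
Definition var n := ('I_d * 'I_n * 'I_n)%type.

(* g : tup n -> 'M[N]_n is a polynomial function, of total degree <= D, in the
   d n^2 commuting variables (X_i)_{jk}, with coefficients in N^{n x n}: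
   every monomial of degree <= D is an exponent vector e : var n -> 'I_D.+1
   with total degree <= D. *)
Definition poly_fun_deg (D n : nat) (g : tup n -> 'M[N]_n) : Prop :=
  exists c : {ffun var n -> 'I_D.+1} -> 'M[N]_n,
    forall X : tup n,
      g X = \sum_(e : {ffun var n -> 'I_D.+1} | (\sum_v (e v : nat) <= D)%N)
              sc (\prod_(v : var n) (X v.1.1 v.1.2 v.2) ^+ e v) (c e).

Definition wordmx n (X : tup n) (w : seq 'I_d) : 'M[K]_n :=
  foldr (fun i A => X i *m A) 1%:M w.

(* X^w p : entries (X^w)_{jk} p *)
Definition mx_scale n (A : 'M[K]_n) (p : N) : 'M[N]_n := map_mx (fun a => a *: p) A.

End NC.

(* Main.v *)
Require Import Defs.
From HB Require Import structures.
From mathcomp Require Import all_boot all_order all_algebra.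
From Stdlib Require Import FunctionalExtensionality.
From mathcomp Require Import zify ring.
Unset Printing Implicit Defensive.
Import GRing.Theory.
Local Open Scope ring_scope.


Lemma mx0E (R : nmodType) m n (i : 'I_m) (j : 'I_n) : (0 : 'M[R]_(m,n)) i j = 0.
Proof. by rewrite mxE. Qed.
Lemma mxK0E (K : fieldType) m n (i : 'I_m) (j : 'I_n) : (0 : 'M[K]_(m,n)) i j = 0.
Proof. by rewrite mxE. Qed.

Section Act.
Variables (K : fieldType) (N : lmodType K).

Lemma ract_mul m n p q (M : 'M[N]_(m, n)) (A : 'M[K]_(n, p)) (B : 'M[K]_(p, q)) :
  ract (ract M A) B = ract M (A *m B).
Proof.
apply/matrixP=> i j; rewrite !mxE.
under eq_bigr do rewrite mxE scaler_sumr.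
rewrite exchange_big /=; apply: eq_bigr => l _; rewrite mxE scaler_suml.
by apply: eq_bigr => k _; rewrite scalerA mulrC.
Qed.

Lemma ract1 n p (M : 'M[N]_(p, n)) : ract M 1%:M = M.
Proof.
apply/matrixP=> i j; rewrite !mxE (bigD1 j) //= mxE eqxx scale1r big1 ?addr0 //.
by move=> k /negPf nkj; rewrite mxE nkj scale0r.
Qed.

End Act.

Section Inter.
Variables (K : fieldType) (N : lmodType K) (d : nat) (f : forall n, tup K d n -> 'M[N]_n).
Hypothesis Hnc : nc_function f.

Lemma intertw m n (X : tup K d n) (Y : tup K d m) (T : 'M[K]_(m, n)) :
  (forall i, T *m X i = Y i *m T) -> lact T (f n X) = ract (f m Y) T.
Proof.
move=> HT; case: Hnc => Hsum Hsim.
pose S : 'M[K]_(m + n) := block_mx 1%:M T 0 1%:M.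
pose Z := fun i => block_mx (Y i) 0 0 (X i).
have SZ i : S *m Z i = Z i *m S.
  rewrite /S /Z !mulmx_block !mulmx0 !mul0mx !mulmx1 !mul1mx !addr0 !add0r.
  by rewrite HT.
have Su : S \in unitmx by rewrite unitmxE det_ublock !det1 mulr1 unitr1.
have HZ : (fun i => S *m Z i *m invmx S) = Z.
  by apply: functional_extensionality => i; rewrite SZ mulmxK.
have := Hsim _ Z S Su; rewrite HZ (Hsum m n Y X) => E.
have E2 : ract (block_mx (f m Y) 0 0 (f n X)) S = lact S (block_mx (f m Y) 0 0 (f n X)).
  by rewrite {1}E ract_mul mulVmx // ract1.
apply/matrixP=> i j.
move/matrixP: E2 => /(_ (lshift n i) (rshift m j)); rewrite !mxE.
rewrite !big_split_ord /= /S.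
rewrite [X in _ + X = _ -> _]big1; last first.
  by move=> k _; rewrite !(block_mxEul, block_mxEur, block_mxEdl, block_mxEdr) mx0E scaler0.
rewrite [X in _ = X + _ -> _]big1; last first.
  by move=> k _; rewrite !(block_mxEul, block_mxEur, block_mxEdl, block_mxEdr) mx0E scaler0.
rewrite addr0 add0r => E3; apply/esym.
transitivity (\sum_(i0 < m) block_mx 1%:M T 0 1%:M (lshift n i0) (rshift m j) *:
       block_mx (f m Y) 0 0 (f n X) (lshift n i) (lshift n i0)).
  by apply: eq_bigr => k _; rewrite !(block_mxEul, block_mxEur, block_mxEdl, block_mxEdr).
rewrite E3; apply: eq_bigr => k _; by rewrite !(block_mxEul, block_mxEur, block_mxEdl, block_mxEdr).
Qed.
End Inter.


Section Vanish.
Variables (K : fieldType).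
Hypothesis Hinf : forall s : seq K, exists x : K, x \notin s.

Lemma pts m : exists s : seq K, [/\ uniq s, size s = m & 0 \notin s].
Proof.
elim: m => [|m [s [us ss ns]]]; first by exists [::].
have [x hx] := Hinf (0 :: s).
move: hx; rewrite inE negb_or => /andP[x0 xs].
exists (x :: s); rewrite /= xs us ss; split=> //.
by rewrite inE negb_or eq_sym x0.
Qed.

Lemma vanish (V : lmodType K) m (c : 'I_m -> V) :
  (forall u : K, u != 0 -> \sum_(i < m) u ^+ i *: c i = 0) -> forall i, c i = 0.
Proof.
move=> Hc l.
have [s [us ss ns]] := pts m.
pose a : 'rV[K]_m := \row_j s`_j.
pose A := (Vandermonde m a)^T.
have Au : A \in unitmx.
  rewrite unitmxE det_tr det_Vandermonde unitfE.
  apply/prodf_neq0 => i _; apply/prodf_neq0 => j /= ij.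
  rewrite !mxE subr_eq0 (nth_uniq 0) ?ss //.
  by apply/eqP => /val_inj eij; move: ij; rewrite eij ltnn.
have HA j : \sum_(i < m) A j i *: c i = 0.
  rewrite -[RHS](Hc (s`_j)); last by apply: contra ns => /eqP <-; rewrite mem_nth ?ss.
  by apply: eq_bigr => i _; rewrite !mxE.
transitivity (\sum_(i < m) (invmx A *m A) l i *: c i).
  rewrite mulVmx // (bigD1 l) //= mxE eqxx scale1r big1 ?addr0 //.
  by move=> i /negPf il; rewrite mxE eq_sym il scale0r.
under eq_bigr do rewrite mxE scaler_suml.
rewrite exchange_big /= big1 // => j _.
under eq_bigr do rewrite -scalerA.
by rewrite -scaler_sumr HA scaler0.
Qed.
End Vanish.


Section PolyEval.
Variables (K : fieldType) (N : lmodType K) (d : nat).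

Lemma size_prod_exp (I : eqType) (r : seq I) (F : I -> {poly K}) (e : I -> nat) :
  (forall v, size (F v) <= 2)%N ->
  (size (\prod_(v <- r) F v ^+ e v)%R <= (\sum_(v <- r) e v).+1)%N.
Proof.
move=> HF; elim: r => [|x r IH]; first by rewrite !big_nil size_poly1.
rewrite !big_cons; apply: leq_trans (size_polyMleq _ _) _.
have := size_poly_exp_leq (F x) (e x); have := HF x.
move: IH; set a := size _; set b := size _; set c := size _.
move=> h1 h2 h3; clearbody a b c.
have h5 : (b.-1 <= 1)%N by lia.
have h4 : (b.-1 * e x <= e x)%N.
  by apply: leq_trans (leq_mul h5 (leqnn _)) _; rewrite mul1n.
lia.
Qed.

Lemma polyeval (D L : nat) (g : tup K d L -> 'M[N]_L) :
  poly_fun_deg D g -> forall (al be : tup K d L),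
  exists W : 'I_D.+1 -> 'M[N]_L, forall t a b,
    g (fun i => al i + t *: be i) a b = \sum_(i < D.+1) t ^+ i *: W i a b.
Proof.
move=> [c Hc] al be.
pose F (v : var d L) : {poly K} :=
  (be v.1.1 v.1.2 v.2)%:P * 'X + (al v.1.1 v.1.2 v.2)%:P.
pose q (e : {ffun var d L -> 'I_D.+1}) := \prod_(v : var d L) F v ^+ e v.
exists (fun i => \matrix_(a, b) \sum_(e : {ffun var d L -> 'I_D.+1} |
             (\sum_v (e v : nat) <= D)%N) (q e)`_i *: c e a b).
move=> t a b; rewrite Hc summxE.
have Hq (e : {ffun var d L -> 'I_D.+1}) : (\sum_v (e v : nat) <= D)%N ->
    \prod_(v : var d L) ((al v.1.1 + t *: be v.1.1) v.1.2 v.2) ^+ e v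
    = \sum_(i < D.+1) (q e)`_i * t ^+ i.
  move=> He; rewrite -horner_coef_wide; last first.
    apply: leq_trans (size_prod_exp _ (index_enum _) F (fun v => e v) _) _.
      by move=> v; rewrite size_MXaddC; case: ifP => // _; rewrite ltnS size_polyC_leq1.
    by rewrite ltnS.
  rewrite /q horner_prod; apply: eq_bigr => v _.
  by rewrite /F horner_exp hornerMXaddC hornerC !mxE mulrC addrC.
under eq_bigr => e He do rewrite mxE (Hq e He) scaler_suml.
rewrite exchange_big /=; apply: eq_bigr => i _; rewrite mxE scaler_sumr.
by apply: eq_bigr => e _; rewrite scalerA mulrC.
Qed.
End PolyEval.


Section Words.
Variable d : nat.
Definition wl l : seq (seq 'I_d) := [seq val t | t <- enum {: l.-tuple 'I_d}].
Fixpoint wsr k : seq (seq 'I_d) := if k is k'.+1 then wsr k' ++ wl k'.+1 else wl 0.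

Lemma mem_wl l w : (w \in wl l) = (size w == l).
Proof.
apply/mapP/idP => [[t _ ->]|/eqP sw]; first by rewrite size_tuple.
by exists (Tuple (introT eqP sw)); rewrite ?mem_enum.
Qed.

Lemma uniq_wl l : uniq (wl l).
Proof. by rewrite map_inj_uniq ?enum_uniq //; apply: val_inj. Qed.

Lemma mem_wsr k w : (w \in wsr k) = (size w <= k)%N.
Proof.
elim: k => [|k IH] /=; first by rewrite mem_wl leqn0.
by rewrite mem_cat IH mem_wl [RHS]leq_eqVlt ltnS orbC.
Qed.

Lemma uniq_wsr k : uniq (wsr k).
Proof.
elim: k => [|k IH] /=; first exact: uniq_wl.
rewrite cat_uniq IH uniq_wl andbT /=; apply/hasPn => w.
by rewrite mem_wl mem_wsr => /eqP ->; rewrite ltnn.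
Qed.

Lemma sum_wsr (V : nmodType) k (G : seq 'I_d -> V) :
  \sum_(w <- wsr k) G w = \sum_(l < k.+1) \sum_(t : l.-tuple 'I_d) G t.
Proof.
elim: k => [|k IH] /=.
  by rewrite big_ord1 big_map big_enum.
by rewrite big_cat IH [in RHS]big_ord_recr /= big_map big_enum.
Qed.
End Words.


Lemma sumA (A : finType) (V : nmodType) (F : 'I_#|{: A}| -> V) :
  \sum_(r < #|{: A}|) F r = \sum_(x : A) F (enum_rank x).
Proof. by rewrite (reindex enum_rank) //; exists enum_val => x _; rewrite ?enum_rankK ?enum_valK. Qed.

Section Delta.
Variables (K : fieldType) (V : lmodType K).
Lemma dsumZ m (F : 'I_m -> V) a : \sum_(j < m) (j == a)%:R *: F j = F a.
Proof.
rewrite (bigD1 a) //= eqxx scale1r big1 ?addr0 // => j /negPf ->; exact: scale0r.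
Qed.
Lemma dsumZ' m (F : 'I_m -> V) a : \sum_(j < m) (a == j)%:R *: F j = F a.
Proof. by under eq_bigr do rewrite eq_sym; exact: dsumZ. Qed.
Lemma dsumDr m (dd : 'rV[K]_m) (F : 'I_m -> V) a : \sum_(j < m) diag_mx dd j a *: F j = dd 0 a *: F a.
Proof.
rewrite (bigD1 a) //= mxE eqxx mulr1n big1 ?addr0 // => j /negPf nj.
by rewrite mxE nj mulr0n scale0r.
Qed.
Lemma dsumDl m (dd : 'rV[K]_m) (F : 'I_m -> V) a : \sum_(j < m) diag_mx dd a j *: F j = dd 0 a *: F a.
Proof.
rewrite (bigD1 a) //= mxE eqxx mulr1n big1 ?addr0 // => j /negPf nj.
by rewrite mxE eq_sym nj mulr0n scale0r.
Qed.
Lemma dsuml m (F : 'I_m -> K) a : \sum_(j < m) (a == j)%:R * F j = F a.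
Proof.
rewrite (bigD1 a) //= eqxx mul1r big1 ?addr0 // => j; rewrite eq_sym => /negPf ->; exact: mul0r.
Qed.
Lemma dsumr m (F : 'I_m -> K) a : \sum_(j < m) F j * (j == a)%:R = F a.
Proof. by under eq_bigr do rewrite mulrC; exact: (dsuml F a) || (under eq_bigr do rewrite eq_sym; exact: dsuml). Qed.
End Delta.

Section Main.
Variables (K : fieldType) (N : lmodType K) (d : nat) (f : forall n, tup K d n -> 'M[N]_n).
Hypothesis Hinf : forall s : seq K, exists x : K, x \notin s.
Hypothesis Hnc : nc_function f.
Variable D : nat.
Hypothesis HD : forall n, poly_fun_deg D (f n).

Definition mm (w : seq 'I_d) : tup K d (size w).+1 :=
  fun i => \matrix_(j, j') ((j' == j.+1 :> nat) && (onth w j == Some i))%:R.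
Definition pw w := f (size w).+1 (mm w) ord0 ord_max.

Definition ws := wsr d D.+1.
Definition P := size ws.
Definition wv (u : 'I_P) := nth [::] ws u.

Lemma wv_inj : injective wv.
Proof.
move=> u u' /eqP; rewrite nth_uniq ?uniq_wsr // => /eqP; exact: val_inj.
Qed.

Lemma wv_ex w : (size w <= D.+1)%N -> {u | wv u = w}.
Proof.
rewrite -mem_wsr -/ws -index_mem => h.
by exists (Ordinal h); rewrite /wv /= nth_index // -index_mem.
Qed.

Lemma size_wv u : (size (wv u) <= D.+1)%N.
Proof. by rewrite -mem_wsr mem_nth. Qed.

Lemma sum_wv1 (V : nmodType) u0 (F : 'I_P -> V) :
  \sum_(u < P) (if wv u == wv u0 then F u else 0) = F u0.
Proof.
rewrite (bigD1 u0) //= eqxx big1 ?addr0 // => u /negPf.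
by rewrite (inj_eq wv_inj) => ->.
Qed.

Definition r0 : 'I_P := sval (@wv_ex [::] isT).
Lemma wv_r0 : wv r0 = [::].
Proof. exact: svalP (@wv_ex [::] isT). Qed.

Section Level.
Variables (n : nat) (Y : tup K d n).
Definition A := ('I_P * 'I_n)%type.
Definition LL := #|{: A}|.
Definition er : A -> 'I_LL := enum_rank.

Lemma sumLL (V : nmodType) (F : 'I_LL -> V) :
  \sum_(r < LL) F r = \sum_(u < P) \sum_(a < n) F (er (u, a)).
Proof. by rewrite sumA pair_big /=; apply: eq_bigr => -[u a]. Qed.

Definition mkM (G : A -> A -> K) : 'M[K]_LL := \matrix_(r, c) G (enum_val r) (enum_val c).
Definition mkR m (G : A -> 'I_m -> K) : 'M[K]_(LL, m) := \matrix_(r, j) G (enum_val r) j.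
Arguments mkR {m}.
Lemma mkME G x y : mkM G (er x) (er y) = G x y.
Proof. by rewrite mxE /er !enum_rankK. Qed.
Lemma mkRE m G x j : @mkR m G (er x) j = G x j.
Proof. by rewrite mxE /er !enum_rankK. Qed.

Definition leafb (x y : A) := (D.+1 <= size (wv x.1))%N && (x.1 == y.1).
Definition edgeb i (x y : A) := (size (wv x.1) < D.+1)%N && (wv y.1 == rcons (wv x.1) i).
Definition al : tup K d LL := fun i => mkM (fun x y => if leafb x y then Y i x.2 y.2 else 0).
Definition be : tup K d LL := fun i => mkM (fun x y => if edgeb i x y then Y i x.2 y.2 else 0).
Definition Mt (t : K) : tup K d LL := fun i => al i + t *: be i.

Lemma MtE t i x y : Mt t i (er x) (er y) =
  (if leafb x y then Y i x.2 y.2 else 0) + t * (if edgeb i x y then Y i x.2 y.2 else 0).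
Proof. by rewrite /Mt !mxE /er !enum_rankK. Qed.

Lemma erK r : er (enum_val r) = r.
Proof. exact: enum_valK. Qed.

Lemma Hmain a c : f n Y a c = \sum_(u < P) f LL (Mt 1) (er (r0, a)) (er (u, c)).
Proof.
pose T := mkR (fun x (b : 'I_n) => (x.2 == b)%:R).
have HT i : T *m Y i = Mt 1 i *m T.
  apply/matrixP => r b; rewrite -(erK r); move: (enum_val r) => x.
  rewrite !mxE sumLL.
  under eq_bigr do rewrite mkRE.
  rewrite dsuml.
  under eq_bigr do under eq_bigr do rewrite mkRE MtE /=.
  under eq_bigr do rewrite dsumr mul1r.
  rewrite big_split /= /leafb /edgeb /=.
  case: (boolP (D.+1 <= size (wv x.1))%N) => hx /=.
    rewrite ltnNge hx /= [X in _ + X]big1 // addr0.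
    rewrite (bigD1 x.1) //= eqxx big1 ?addr0 // => u; rewrite eq_sym => /negPf ->.
    by [].
  rewrite big1 // add0r ltnNge hx /=.
  have /wv_ex [u1 hu1] : (size (rcons (wv x.1) i) <= D.+1)%N.
    by rewrite size_rcons; move: hx; rewrite -ltnNge.
  by rewrite -hu1 sum_wv1.
have := @intertw _ _ _ _ Hnc _ _ _ _ _ HT => /matrixP /(_ (er (r0, a)) c).
rewrite !mxE sumLL.
under eq_bigr do rewrite mkRE /=.
rewrite dsumZ' => ->; apply: eq_bigr => u _.
under eq_bigr do rewrite mkRE /=.
exact: dsumZ.
Qed.
Lemma ifE (b : bool) (x y : K) : (if b then x else 0) * y = if b then x * y else 0.
Proof. by case: b; rewrite ?mul0r. Qed.

Lemma onth_some (T0 : Type) (x0 : T0) (v : seq T0) j :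
  (j < size v)%N -> onth v j = Some (nth x0 v j).
Proof. by move=> h; rewrite onthE (nth_map x0). Qed.

Lemma Hword u a c : (size (wv u) < D.+1)%N ->
  f LL (Mt 1) (er (r0, a)) (er (u, c)) = wordmx Y (wv u) a c *: pw (wv u).
Proof.
move=> hu; rewrite /pw.
set v := wv u; move: hu; rewrite -/v => hv.
pose T' := mkR (fun x (j : 'I_(size v).+1) =>
   if wv x.1 == take j v then wordmx Y (drop j v) x.2 c else 0).
have HT i : T' *m mm v i = Mt 1 i *m T'.
  apply/matrixP => r j; rewrite -(erK r); move: (enum_val r) => x.
  rewrite !mxE sumLL.
  case: j => [[|j0] hj] /=.
    rewrite big1 => [|j' _]; last by rewrite /mm [X in _ * X]mxE /= mulr0.
    rewrite big1 // => u' _; rewrite big1 // => b _.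
    rewrite mkRE MtE /= take0 /leafb /edgeb /=.
    have [e|ne] := eqVneq (wv u') [::]; last by rewrite mulr0.
    rewrite e; have -> : ([::] == rcons (wv x.1) i) = false by case: (wv x.1).
    rewrite andbF mulr0 addr0.
    case: eqP => [ex|]; last by rewrite andbF mul0r.
    by rewrite ex e /= mul0r.
  have hj0 : (j0 < size v)%N by [].
  have /wv_ex [uj huj] : (size (take j0.+1 v) <= D.+1)%N.
    by rewrite size_take; case: ifP => _; apply: ltnW => //; apply: leq_ltn_trans hv.
  rewrite (eq_bigr (fun u' => if wv u' == wv uj then
       \sum_(b < n) Mt 1 i (er x) (er (u', b)) * wordmx Y (drop j0.+1 v) b c else 0)); last first.
    move=> u' _; rewrite huj; case: eqP => [e|ne].
      by apply: eq_bigr => b _; rewrite mkRE /= e eqxx.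
    by rewrite big1 // => b _; rewrite mkRE /=; case: eqP => // _; rewrite mulr0.
  rewrite sum_wv1.
  rewrite (bigD1 (Ordinal (ltnW hj))) //= big1 ?addr0; last first.
    move=> j' hj'; rewrite /mm [X in _ * X]mxE /= eqSS.
    rewrite (_ : (j0 == j') = false) ?mulr0 //; apply/negbTE.
    by apply: contra hj' => /eqP e; apply/eqP/val_inj.
  rewrite mkRE /mm mxE /= eqxx /=.
  have hl : ((D < size (wv x.1))%N && (x.1 == uj)) = false.
    apply/negbTE; rewrite negb_and -leqNgt; case: eqP => [->|]; last by rewrite orbT.
    rewrite orbF huj size_take -ltnS; case: ifP => [h|_] //; exact: leq_ltn_trans (ltnW h) hv.
  under eq_bigr do rewrite MtE /leafb /edgeb /= huj hl add0r mul1r.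
  rewrite (@take_nth _ i _ _ hj0) (@onth_some _ i _ _ hj0) eqseq_rcons.
  have [ex|nx] := eqVneq (wv x.1) (take j0 v); last first.
    by rewrite mul0r big1 // => b _; rewrite andbF /= mul0r.
  rewrite ex (leq_ltn_trans _ hv) ?size_take /=; last by case: ifP => // /ltnW.
  have [ei|ni] := eqVneq (nth i v j0) i; last first.
    rewrite (_ : (Some (nth i v j0) == Some i) = false) ?mulr0; last first.
      by apply/negbTE; apply: contra ni => /eqP [->].
    by rewrite big1 // => b _; rewrite mul0r.
  rewrite ei eqxx mulr1 (@drop_nth _ i _ _ hj0) ei /= mxE.
  by [].
have := @intertw _ _ _ _ Hnc _ _ _ _ _ HT => /matrixP /(_ (er (r0, a)) ord_max).
rewrite !mxE sumLL (bigD1 ord0) //= big1 ?addr0; last first.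
  move=> j hj; rewrite mkRE /= wv_r0.
  have hs : size (take j v) = j by rewrite size_takel // -ltnS.
  case: eqP => [e|]; last by rewrite scale0r.
  exfalso; move: hj; rewrite -e /= in hs.
  by apply/negP; rewrite negbK; apply/eqP/val_inj; rewrite /= -hs.
rewrite mkRE /= wv_r0 take0 eqxx drop0 => ->.
rewrite (eq_bigr (fun u' => if wv u' == wv u then f LL (Mt 1) (er (r0, a)) (er (u', c)) else 0)).
  by rewrite sum_wv1.
move=> u' _; under eq_bigr do rewrite mkRE /= take_size drop_size.
rewrite -/v; case: eqP => _; last by rewrite big1 // => b _; rewrite scale0r.
under eq_bigr do rewrite /wordmx /= mxE.
by rewrite -(@dsumZ _ _ _ (fun b => f LL (Mt 1) (er (r0, a)) (er (u', b))) c).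
Qed.

Lemma Hvan u a c : (D.+1 <= size (wv u))%N ->
  f LL (Mt 1) (er (r0, a)) (er (u, c)) = 0.
Proof.
move=> hu.
have hsu : size (wv u) = D.+1 by apply/eqP; rewrite eqn_leq hu size_wv.
have [W HW] := @polyeval K N d D LL (f LL) (HD LL) al be.
set r := er (r0, a); set q := er (u, c).
pose h t := f LL (Mt t) r q.
have Hs t s : s != 0 -> h (t * s^-1) = s^-1 ^+ D.+1 *: h t.
  move=> s0.
  pose Ds := diag_mx (\row_(j < LL) s ^+ size (wv (enum_val j).1)).
  pose Ds' := diag_mx (\row_(j < LL) s^-1 ^+ size (wv (enum_val j).1)).
  have DD : Ds *m Ds' = 1%:M.
    apply/matrixP => i j; rewrite mul_diag_mx !mxE.
    case: eqP => [->|]; last by rewrite !mulr0n mulr0.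
    by rewrite !mulr1n -exprMn mulfV // expr1n.
  have [Dsu _] := mulmx1_unit DD.
  have iD : invmx Ds = Ds' by rewrite -[invmx Ds]mulmx1 -DD mulKmx.
  have HC : (fun i => Ds *m Mt t i *m invmx Ds) = Mt (t * s^-1).
    apply: FunctionalExtensionality.functional_extensionality => i.
    apply/matrixP => r1 c1; rewrite -(erK r1) -(erK c1).
    move: (enum_val r1) (enum_val c1) => x y.
    rewrite iD mul_mx_diag mul_diag_mx !mxE /er !enum_rankK.
    rewrite /leafb /edgeb.
    have ha : s ^+ size (wv x.1) != 0 by rewrite expf_neq0.
    case: (boolP (D.+1 <= size (wv x.1))%N) => hx.
      rewrite ltnNge hx /= !mulr0 !addr0.
      case: eqP => [<-|]; last by rewrite !mulr0 mul0r.
      by rewrite exprVn; field.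
    rewrite ltnNge hx /= !add0r.
    case: eqP => [e|]; last by rewrite !mulr0 mul0r.
    by rewrite e size_rcons exprVn exprS; field; rewrite ha s0.
  have := (proj2 Hnc) LL (Mt t) Ds Dsu; rewrite HC => /matrixP /(_ r q).
  rewrite /h => ->; rewrite iD /ract /lact !mxE dsumDr [X in _ *: X]mxE dsumDl !mxE /r /q /er !enum_rankK.
  by rewrite /= wv_r0 expr0 scale1r hsu.
have Hz z : z != 0 -> h z = z ^+ D.+1 *: h 1.
  by move=> z0; have := Hs 1 (z^-1) (invr_neq0 z0); rewrite mul1r invrK.
pose cc (i : 'I_D.+2) := if (i < D.+1)%N then W (inord i) r q else - h 1.
have := @vanish K Hinf N D.+2 cc.
have Hc : forall z, z != 0 -> \sum_(i < D.+2) z ^+ i *: cc i = 0.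
  move=> z z0; rewrite big_ord_recr /= /cc /= ltnn scalerN.
  under eq_bigr do rewrite /= ltn_ord inord_val.
  have <- : h z = \sum_(i < D.+1) z ^+ i *: W i r q by rewrite /h -HW.
  by rewrite Hz // subrr.
move=> /(_ Hc ord_max); rewrite /cc /= ltnn => /eqP; rewrite oppr_eq0 => /eqP.
by [].
Qed.

End Level.

Lemma main_formula n (Y : tup K d n) :
  f n Y = \sum_(l < D.+1) \sum_(w : l.-tuple 'I_d) mx_scale (wordmx Y w) (pw w).
Proof.
apply/matrixP => a c.
rewrite Hmain summxE.
under [RHS]eq_bigr do rewrite summxE.
pose G (w : seq 'I_d) := if (size w < D.+1)%N then wordmx Y w a c *: pw w else 0.
transitivity (\sum_(u < P) G (wv u)).
  apply: eq_bigr => u _; rewrite /G; case: ifP => h; first exact: Hword.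
  by apply: Hvan; rewrite leqNgt h.
rewrite (_ : \sum_(u < P) G (wv u) = \sum_(w <- ws) G w); last first.
  by rewrite [RHS](big_nth [::]) big_mkord.
rewrite /ws sum_wsr big_ord_recr /= [X in _ + X]big1 ?addr0; last by move=> t _; rewrite /G size_tuple ltnn.
apply: eq_bigr => l _; apply: eq_bigr => t _; rewrite /G size_tuple ltn_ord mxE.
by [].
Qed.
End Main.

Theorem theorem6p1 (K : fieldType) (N : lmodType K) (d : nat)
    (f : forall n, tup K d n -> 'M[N]_n) :
  (forall s : seq K, exists x : K, x \notin s) ->
  nc_function f ->
  (exists D : nat, forall n, poly_fun_deg D (f n)) ->
  exists (L : nat) (p : seq 'I_d -> N),
    forall n (X : tup K d n),
      f n X = \sum_(l < L.+1) \sum_(w : l.-tuple 'I_d) mx_scale (wordmx X w) (p w).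
Proof.
move=> Hinf Hnc [D HD]; exists D, (@pw K N d f) => n X.
exact: (@main_formula K N d f Hinf Hnc D HD n X).
Qed.
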